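(* Let $\mathcal{T}$ be a triangulation of $C(m,2d+1)$ with a mutable $d$-simplex $A\in\operatorname{simp}(\mathcal{T})$ which is replaced by the $(d+1)$-simplex $B=(b_0,\dots,b_{d+1})$ in the increasing flip. Then $B'=(b_1,b_2,\dots,b_d)$ is the unique support of $A$ with respect to $\operatorname{simp}(\mathcal{T})$.
   Context: $C(V,n)$ is the cyclic polytope on a finite ordered set $V$ (convex hull of $(t_v,\dots,t_v^n)$, $t_v$ increasing); a triangulation is a set of $(n+1)$-subsets of $V$ whose geometric simplices form a simplicial complex covering $C(V,n)$; its simplices include all faces (subsets) of its members. A $k$-simplex is a $(k+1)$-subset, always written in increasing order $A=(a_0,a_1,\dots)$. An $n$-subset $F\subseteq V$ is a lower (upper) facet of $C(V,n)$ iff every $w\in V\setminus F$ has an even (odd) number of elements of $F$ greater than it. A $d$-simplex $A\subseteq[m]$ is internal for $C(m,2d+1)$ if it lies in no facet of $C(m,2d+1)$; equivalently $a_{i+1}\geq a_i+2$ for all $i$, $a_d\leq a_0+m-2$, $a_0\neq 1$, $a_d\neq m$ (the set of these is denoted $\nu_{m,d}$ here). $\operatorname{simp}(\mathcal{T})$ is the set of internal $d$-simplices that are faces of simplices of $\mathcal{T}$. For a $d$-subset $\Sigma$ (size $d$) and a $(d+1)$-subset $A$, write $\Sigma\wr A$ if $a_0<\sigma_0<a_1<\dots<\sigma_{d-1}<a_d$; for a $(d+1)$-subset $A$ and a $(d+2)$-subset $B$, write $A\wr B$ if $b_0<a_0<b_1<\dots<a_d<b_{d+1}$. For $|U|=2d+3$,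 $C(U,2d+1)$ has two triangulations, the lower one (lower facets of $C(U,2d+2)$) and the upper one (upper facets). $A\in\operatorname{simp}(\mathcal{T})$ is a mutable $d$-simplex replaced by the $(d+1)$-simplex $B$ if $A\wr B$, $C(A\cup B,2d+1)$ is a subpolytope of $\mathcal{T}$ (i.e. $\{S\in\mathcal{T}:S\subseteq A\cup B\}$ triangulates it), and the induced triangulation is the lower one; the increasing flip replaces it by the upper triangulation. For $\mathbf{X}\subseteq\nu_{m,d}$ and $A\in\mathbf{X}$, a $(d-1)$-simplex $\Sigma$ (a $d$-subset) is a support for $A$ if $\Sigma\wr A$ and every $C\in\nu_{m,d}$ with $C\subseteq A\cup\Sigma$ lies in $\mathbf{X}$. *)

(* Defs.v *)
From HB Require Import structures.
From mathcomp Require Import all_boot all_order all_algebra.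
Set Implicit Arguments. Unset Strict Implicit. Unset Printing Implicit Defensive.
Import Order.TTheory GRing.Theory Num.Theory.

(* Vertices of C(m,n) are 1..m, represented as the nonzero elements of 'I_m.+1. *)
Definition Vm (m : nat) : {set 'I_m.+1} := [set v : 'I_m.+1 | 0 < val v].

Definition elems (m : nat) (S : {set 'I_m.+1}) : seq nat :=
  sort leq [seq val i | i <- enum S].

Definition interlace (s t : seq nat) : bool :=
  (size t == (size s).+1) &&
  all (fun i => (nth 0 t i < nth 0 s i) && (nth 0 s i < nth 0 t i.+1))
      (iota 0 (size s)).

Section Geometry.
Local Open Scope ring_scope.
Variables (R : realFieldType) (n m : nat) (t : 'I_m.+1 -> R).

Definition mpoint (v : 'I_m.+1) : 'rV[R]_n := \row_(k < n) (t v ^+ k.+1).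

Definition in_conv (S : {set 'I_m.+1}) (x : 'rV[R]_n) : Prop :=
  exists lam : 'I_m.+1 -> R,
    [/\ forall v, 0 <= lam v,
        forall v, v \notin S -> lam v = 0,
        \sum_v lam v = 1
      & x = \sum_v lam v *: mpoint v].

(* T is a triangulation of the cyclic polytope C(U,n): a set of (n+1)-subsets
   of U whose geometric simplices intersect properly (pairwise intersection is
   the common face spanned by the common vertices) and cover conv(U). *)
Definition triangulates (U : {set 'I_m.+1}) (T : {set {set 'I_m.+1}}) : Prop :=
  [/\ forall S, S \in T -> S \subset U /\ #|S| = n.+1,
      forall S1 S2, S1 \in T -> S2 \in T -> forall x,
        (in_conv S1 x /\ in_conv S2 x) <-> in_conv (S1 :&: S2) x
    & forall x, in_conv U x -> exists2 S, S \in T & in_conv S x].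
End Geometry.

(* lower triangulation of C(U,n) for |U| = n+2: the lower facets of C(U,n+1),
   i.e. (n+1)-subsets F of U s.t. every w in U \ F has an even number of
   elements of F greater than it. *)
Definition lower_tri (n m : nat) (U : {set 'I_m.+1}) : {set {set 'I_m.+1}} :=
  [set F : {set 'I_m.+1} | [&& F \subset U, #|F| == n.+1 &
     [forall w in U :\: F, ~~ odd #|[set f in F | w < f]| ]]].

(* nu_{m,d}: internal d-simplices of C(m,2d+1) *)
Definition nu (m d : nat) (A : {set 'I_m.+1}) : bool :=
  let a := elems A in
  [&& #|A| == d.+1, A \subset Vm m,
      all (fun i => nth 0 a i + 2 <= nth 0 a i.+1) (iota 0 d),
      nth 0 a d + 2 <= nth 0 a 0 + m,
      nth 0 a 0 != 1 & nth 0 a d != m].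

Definition simp (m d : nat) (T : {set {set 'I_m.+1}}) : {set {set 'I_m.+1}} :=
  [set A : {set 'I_m.+1} | nu d A && [exists S in T, A \subset S]].

Definition is_support (m d : nat) (X : {set {set 'I_m.+1}})
    (A Sigma : {set 'I_m.+1}) : Prop :=
  [/\ #|Sigma| = d, Sigma \subset Vm m,
      interlace (elems Sigma) (elems A)
    & forall C : {set 'I_m.+1}, nu d C -> C \subset A :|: Sigma -> C \in X].

Definition inner (m d : nat) (B : {set 'I_m.+1}) : {set 'I_m.+1} :=
  [set x in B | (val x != nth 0 (elems B) 0) && (val x != nth 0 (elems B) d.+1)].

(* Main.v *)
Require Import Defs.
From HB Require Import structures.
From mathcomp Require Import all_boot all_order all_algebra.
From mathcomp Require Import zify ring lra.
Import Order.TTheory GRing.Theory Num.Theory.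

Set Implicit Arguments. Unset Strict Implicit. Unset Printing Implicit Defensive.

Lemma ltnth (s : seq nat) i j : sorted ltn s -> i < j -> j < size s ->
  nth 0 s i < nth 0 s j.
Proof.
move=> ss ij js; apply: (sorted_ltn_nth ltn_trans) => //; rewrite inE //.
exact: ltn_trans ij js.
Qed.

Lemma lenth (s : seq nat) i j : sorted ltn s -> i <= j -> j < size s ->
  nth 0 s i <= nth 0 s j.
Proof.
move=> ss; rewrite leq_eqVlt => /orP[/eqP->//|ij] js.
exact/ltnW/ltnth.
Qed.

Lemma nth_rev_lt (s : seq nat) i j : sorted ltn s -> i < size s -> j < size s ->
  nth 0 s i < nth 0 s j -> i < j.
Proof.
move=> ss hi hj h; rewrite ltnNge; apply/negP=> ji.
have := lenth ss ji hi; lia.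
Qed.

Lemma nth_inj (s : seq nat) i j : sorted ltn s -> i < size s -> j < size s ->
  nth 0 s i = nth 0 s j -> i = j.
Proof.
move=> ss hi hj h; case: (ltngtP i j) => // ij.
  by have := ltnth ss ij hj; lia.
by have := ltnth ss ij hi; lia.
Qed.

Lemma sorted_from_nth (s : seq nat) :
  (forall i, i.+1 < size s -> nth 0 s i < nth 0 s i.+1) -> sorted ltn s.
Proof. by move=> h; apply/(sortedP 0). Qed.

Section Elems.
Variable m : nat.
Implicit Types S : {set 'I_m.+1}.

Lemma elems_sorted S : sorted ltn (elems S).
Proof.
rewrite ltn_sorted_uniq_leq sort_uniq map_inj_uniq ?enum_uniq //=; last exact: val_inj.
exact: (sort_sorted leq_total).
Qed.

Lemma size_elems S : size (elems S) = #|S|.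
Proof. by rewrite size_sort size_map cardE. Qed.

Lemma mem_elems S x : (x \in elems S) = [exists v in S, val v == x].
Proof.
rewrite mem_sort; apply/mapP/existsP => [[v]|[v /andP[vS /eqP <-]]].
  by rewrite mem_enum => vS ->; exists v; rewrite vS eqxx.
by exists v; rewrite ?mem_enum.
Qed.

Lemma val_in_elems S v : (val v \in elems S) = (v \in S).
Proof. by rewrite mem_sort (mem_map val_inj) mem_enum. Qed.

Lemma elems_le S x : x \in elems S -> x <= m.
Proof. by rewrite mem_elems => /existsP[v /andP[_ /eqP<-]]; rewrite -ltnS ltn_ord. Qed.

Lemma inord_in S x : x \in elems S -> inord x \in S.
Proof.
move=> h; rewrite -val_in_elems /= inordK //; rewrite ltnS; exact: elems_le h.
Qed.

Lemma nth_elems_in S i : i < #|S| -> inord (nth 0 (elems S) i) \in S.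
Proof. by move=> h; apply: inord_in; apply: mem_nth; rewrite size_elems. Qed.

Lemma nth_elems_le S i : i < #|S| -> nth 0 (elems S) i <= m.
Proof. by move=> h; apply: elems_le; apply: mem_nth; rewrite size_elems. Qed.

Lemma elems_inj S1 S2 : elems S1 = elems S2 -> S1 = S2.
Proof. by move=> e; apply/setP=> v; rewrite -!val_in_elems e. Qed.

Lemma elems_seq (cs : seq nat) : sorted ltn cs -> all (fun x => x <= m) cs ->
  elems [set v : 'I_m.+1 | val v \in cs] = cs.
Proof.
move=> sc ac; apply: (irr_sorted_eq ltn_trans ltnn) => //; first exact: elems_sorted.
move=> x; rewrite mem_elems; apply/existsP/idP => [[v /andP[]]|xc].
  by rewrite inE => h /eqP <-.
have xm : x < m.+1 by rewrite ltnS; exact: (allP ac).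
by exists (Ordinal xm); rewrite inE /= xc eqxx.
Qed.

Lemma card_seq (cs : seq nat) : sorted ltn cs -> all (fun x => x <= m) cs ->
  #|[set v : 'I_m.+1 | val v \in cs]| = size cs.
Proof. by move=> sc ac; rewrite -size_elems elems_seq. Qed.

End Elems.

Lemma interlaceP s t : reflect (size t = (size s).+1 /\
   forall i, i < size s -> nth 0 t i < nth 0 s i /\ nth 0 s i < nth 0 t i.+1)
  (interlace s t).
Proof.
apply: (iffP andP) => [[/eqP-> /allP h]|[-> h]]; split => //.
  move=> i ii; have : i \in iota 0 (size s) by rewrite mem_iota add0n.
  by move/h=> /andP[].
by apply/allP=> i; rewrite mem_iota add0n => /h [-> ->].
Qed.

Lemma interlace_sorted s t : interlace s t -> sorted ltn s /\ sorted ltn t.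
Proof.
move=> /interlaceP [st h]; split; apply: sorted_from_nth => i hi.
  have [h1 h2] := h i (ltnW hi); have [h3 h4] := h i.+1 hi; lia.
rewrite st ltnS in hi; have [h1 h2] := h i hi; lia.
Qed.

Section Inter.
Variables (c e : seq nat).
Hypothesis hi : interlace c e.

Let se : size e = (size c).+1. Proof. by case/interlaceP: hi. Qed.
Let h : forall i, i < size c -> nth 0 e i < nth 0 c i /\ nth 0 c i < nth 0 e i.+1.
Proof. by case/interlaceP: hi. Qed.
Let sc : sorted ltn c. Proof. by case: (interlace_sorted hi). Qed.
Let ste : sorted ltn e. Proof. by case: (interlace_sorted hi). Qed.

Lemma inter_disj (x : nat) : x \in c -> x \in e -> False.
Proof.
case/(nthP 0) => j hj ej /(nthP 0) [k hk ek].
have {}ej : @nth nat 0 c j = x := ej.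
have {}ek : @nth nat 0 e k = x := ek.
have hje : j < size e by rewrite se ltnW.
have [h1 h2] := h hj.
case: (leqP k j) => kj.
  have := lenth ste kj hje; lia.
have := lenth ste kj hk; lia.
Qed.

Lemma inter_gap1 j (x : nat) : j < size c -> (x \in c) || (x \in e) ->
  ~~ ((nth 0 e j < x) && (x < nth 0 c j)).
Proof.
move=> hj; have hje : j < size e by rewrite se ltnW.
move=> /orP[] /(nthP 0) [k hk ek]; apply/negP => /andP[l1 l2].
  have {}ek : @nth nat 0 c k = x := ek. subst x.
  have kj := nth_rev_lt sc hk hj l2.
  have [h1 h2] := h hk.
  have := lenth ste kj hje; lia.
have {}ek : @nth nat 0 e k = x := ek. subst x.
have jk := nth_rev_lt ste hje hk l1.
have [h1 h2] := h hj.
have := lenth ste jk hk; lia.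
Qed.

Lemma inter_gap2 j (x : nat) : j < size c -> (x \in c) || (x \in e) ->
  ~~ ((nth 0 c j < x) && (x < nth 0 e j.+1)).
Proof.
move=> hj; have hje : j < size e by rewrite se ltnW.
have hje' : j.+1 < size e by rewrite se.
move=> /orP[] /(nthP 0) [k hk ek]; apply/negP => /andP[l1 l2].
  have {}ek : @nth nat 0 c k = x := ek. subst x.
  have jk := nth_rev_lt sc hj hk l1.
  have [h1 h2] := h hk.
  have := lenth sc jk hk; have [h3 h4] := @h j.+1 (leq_ltn_trans jk hk); lia.
have {}ek : @nth nat 0 e k = x := ek. subst x.
have kj := nth_rev_lt ste hk hje' l2.
have [h1 h2] := h hj.
have := lenth ste (kj : k <= j) hje; lia.
Qed.

End Inter.

Section Geo.
Local Open Scope ring_scope.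
Variables (R : realFieldType) (n m : nat) (t : 'I_m.+1 -> R).
Hypothesis ht : forall u v : 'I_m.+1, (0 < val u)%N -> (val u < val v)%N -> t u < t v.

Definition moments (a : 'I_m.+1 -> R) :=
  forall k, (k < n.+1)%N -> \sum_v a v * t v ^+ k = 0.

Lemma poly_sum a : moments a -> forall p : {poly R}, (size p <= n.+1)%N ->
  \sum_v a v * p.[t v] = 0.
Proof.
move=> ha p sp.
under eq_bigr => v _ do rewrite horner_coef big_distrr /=.
rewrite exchange_big /= big1 // => i _.
under eq_bigr => v _ do rewrite mulrCA.
rewrite -big_distrr /= ha ?mulr0 //.
exact: leq_trans (ltn_ord i) sp.
Qed.

Lemma tneq u v : (0 < val u)%N -> (0 < val v)%N -> u != v -> t u != t v.
Proof.
move=> hu hv; apply: contraNN => /eqP e; apply/eqP/val_inj.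
case: (ltngtP (val u) (val v)) => // h.
  by have := ht hu h; rewrite e ltxx.
by have := ht hv h; rewrite e ltxx.
Qed.

Definition Pl (S : {set 'I_m.+1}) : {poly R} := \prod_(w in S) ('X - (t w)%:P).

Lemma size_Pl (S : {set _}) : size (Pl S) = #|S|.+1.
Proof.
have := size_prod_XsubC [seq t w | w <- enum S] id.
by rewrite big_map big_enum /= size_map -cardE.
Qed.

Lemma horner_Pl (S : {set _}) x : (Pl S).[x] = \prod_(w in S) (x - t w).
Proof. by rewrite /Pl horner_prod; apply: eq_bigr => w _; rewrite hornerXsubC. Qed.

Lemma Pl_root (S : {set _}) (w : 'I_m.+1) : w \in S -> (Pl S).[t w] = 0.
Proof. by move=> wS; rewrite horner_Pl (bigD1 w) //= subrr mul0r. Qed.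

Lemma indep (S : {set 'I_m.+1}) b : S \subset Vm m -> (#|S| <= n.+1)%N ->
  (forall v, v \notin S -> b v = 0) -> moments b -> forall v, b v = 0.
Proof.
move=> SV cS bS hb v; case vS: (v \in S); last by rewrite bS ?vS.
have := poly_sum hb (p := Pl (S :\ v)).
rewrite size_Pl ltnS.
have := cardsD1 v S; rewrite vS add1n => e.
rewrite -ltnS -e => /(_ cS).
rewrite (bigD1 v) //= big1 ?addr0; last first.
  move=> w wv; case wS: (w \in S); last by rewrite bS ?wS ?mul0r.
  by rewrite Pl_root ?mulr0 // !inE wv.
have nz : (Pl (S :\ v)).[t v] != 0.
  rewrite horner_Pl; apply/prodf_neq0 => w; rewrite !inE => /andP[wv wS].
  rewrite subr_eq0 eq_sym; apply: tneq.
  - by move/subsetP: SV => /(_ _ wS); rewrite inE.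
  - by move/subsetP: SV => /(_ _ vS); rewrite inE.
  - exact: wv.
by move/eqP; rewrite mulf_eq0 (negbTE nz) orbF => /eqP.
Qed.


Lemma exists_dep (W : {set 'I_m.+1}) : #|W| = n.+2 ->
  exists a : 'I_m.+1 -> R, [/\ forall v, v \notin W -> a v = 0, moments a
    & exists v, a v != 0].
Proof.
move=> hW.
pose M : 'M[R]_(#|W|, n.+1) := \matrix_(i, k) t (enum_val i) ^+ k.
have hK : kermx M != 0.
  rewrite -mxrank_eq0 mxrank_ker; have := rank_leq_col M; move: (\rank M) => rk.
  rewrite hW; lia.
have [r hr] : exists r, row r (kermx M) != 0.
  apply/existsP; move: hK; apply: contraNT; rewrite negb_exists => /forallP h.
  apply/eqP/row_matrixP => r; rewrite row0; exact/eqP/negPn/h.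
set b := row r (kermx M).
have hb : b *m M = 0 by rewrite /b -row_mul mulmx_ker row0.
have [i0 hi0] : exists i, b 0 i != 0.
  apply/existsP; move: hr; apply: contraNT; rewrite negb_exists => /forallP h.
  apply/eqP/matrixP => i j; rewrite (ord1 i) [RHS]mxE; exact/eqP/negPn/h.
pose a v := \sum_(i < #|W| | enum_val i == v) b 0 i.
exists a; split.
- move=> v vW; apply: big1 => i /eqP ei; move: vW; rewrite -ei.
  by rewrite enum_valP.
- move=> k hk.
  transitivity (\sum_i b 0 i * t (enum_val i) ^+ k).
    under eq_bigr => v _ do rewrite /a big_distrl /= big_mkcond /=.
    rewrite exchange_big /=; apply: eq_bigr => i _.
    rewrite (bigD1 (enum_val i)) //= eqxx big1 ?addr0 // => v.
    by rewrite eq_sym => /negbTE ->.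
  transitivity ((b *m M) 0 (Ordinal hk)); last by rewrite hb mxE.
  rewrite [RHS]mxE; apply: eq_bigr => i _; rewrite [M _ _]mxE //.
- exists (enum_val i0); rewrite /a (big_pred1 i0) // => j.
  by rewrite /= (inj_eq enum_val_inj).
Qed.

Lemma dep_sign (W : {set 'I_m.+1}) a u u' : W \subset Vm m -> #|W| = n.+2 ->
  (forall v, v \notin W -> a v = 0) -> moments a ->
  u \in W -> u' \in W -> (val u < val u')%N ->
  (forall w, w \in W -> ~~ ((val u < val w) && (val w < val u'))%N) ->
  a u * a u' <= 0.
Proof.
move=> WV hW aW ha uW u'W uu' hc.
have pos w : w \in W -> (0 < val w)%N.
  by move=> wW; move/subsetP: WV => /(_ _ wW); rewrite inE.
have u'u : u' != u by apply/eqP=> e; move: uu'; rewrite e ltnn.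
have u'Wu : u' \in W :\ u by rewrite !inE u'u.
pose P := Pl (W :\ u :\ u').
have sP : (size P <= n.+1)%N.
  rewrite size_Pl; have := cardsD1 u W; have := cardsD1 u' (W :\ u).
  by rewrite uW u'Wu hW; lia.
have := poly_sum ha sP.
rewrite (bigD1 u) //= (bigD1 u') //= big1 ?addr0; last first.
  move=> w /andP[wu' wu]; case wW: (w \in W); last by rewrite aW ?wW ?mul0r.
  by rewrite Pl_root ?mulr0 // !inE wu' wu.
move=> h; have hp : 0 < P.[t u] * P.[t u'].
  rewrite !horner_Pl -big_split /=; apply: prodr_gt0 => w; rewrite !inE.
  case/and3P => wu' wu wW; have hcw := hc w wW.
  have pw := pos w wW; have pu := pos u uW.
  have nu : val w != val u by apply: contra wu => /eqP/val_inj ->.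
  have nu' : val w != val u' by apply: contra wu' => /eqP/val_inj ->.
  case: (ltngtP (val w) (val u)) nu => // wlt _.
    have h1 := ht pw wlt; have h2 := ht pw (ltn_trans wlt uu').
    by apply: mulr_gt0; rewrite subr_gt0.
  case: (ltngtP (val w) (val u')) nu' => // [wlt'|ult'] _.
    by move: hcw; rewrite wlt wlt'.
  have h1 := ht pu wlt; have h2 := ht (ltn_trans pu uu') ult'.
  by rewrite -mulrNN; apply: mulr_gt0; rewrite oppr_gt0 subr_lt0.
nra.
Qed.

Lemma conv_entry (lam : 'I_m.+1 -> R) (k : 'I_n) :
  (\sum_v lam v *: mpoint n t v) 0 k = \sum_v lam v * t v ^+ k.+1.
Proof. by rewrite summxE; apply: eq_bigr => v _; rewrite !mxE. Qed.

Lemma mom_vec a : moments a -> \sum_v a v *: mpoint n t v = 0.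
Proof.
move=> ha; apply/matrixP => i k; rewrite (ord1 i) conv_entry mxE; exact: (ha k.+1 (ltn_ord k)).
Qed.

Lemma conv_diff (x : 'rV[R]_n) lam mu : \sum_v lam v = 1 -> \sum_v mu v = 1 ->
  x = \sum_v lam v *: mpoint n t v -> x = \sum_v mu v *: mpoint n t v ->
  moments (fun v => lam v - mu v).
Proof.
move=> s1 s2 x1 x2 [_|k hk].
  under eq_bigr => v _ do rewrite expr0 mulr1.
  by rewrite sumrB s1 s2 subrr.
under eq_bigr => v _ do rewrite mulrBl.
have hk' : (k < n)%N by rewrite -ltnS.
rewrite sumrB -(conv_entry lam (Ordinal hk')) -(conv_entry mu (Ordinal hk')).
by rewrite -x1 -x2 subrr.
Qed.

Lemma conv_mono (S S' : {set 'I_m.+1}) (x : 'rV[R]_n) : S \subset S' -> in_conv t S x -> in_conv t S' x.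
Proof.
move=> SS' [lam [h1 h2 h3 h4]]; exists lam; split => // v vS'.
by apply: h2; apply: contra vS'; apply: (subsetP SS').
Qed.

Lemma geo (d : nat) (T : {set {set 'I_m.+1}}) S1 S2 (C D : {set 'I_m.+1}) :
  n = d.*2.+1 -> triangulates n t (Vm m) T -> S1 \in T -> S2 \in T ->
  C \subset S1 -> D \subset S2 -> #|C| = d.+1 ->
  interlace (elems C) (elems D) -> False.
Proof.
move=> hn [hT1 hT2 hT3] S1T S2T CS1 DS2 hC hI.
have [S1V cS1] := hT1 _ S1T; have [S2V cS2] := hT1 _ S2T.
have CV : C \subset Vm m := subset_trans CS1 S1V.
have DV : D \subset Vm m := subset_trans DS2 S2V.
have [se hh] := interlaceP _ _ hI.
have sc : size (elems C) = d.+1 by rewrite size_elems.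
have hD : #|D| = d.+2 by rewrite -size_elems se sc.
have disj : C :&: D = set0.
  apply/setP => v; rewrite !inE; apply/negP => /andP[vC vD].
  by apply: (inter_disj hI (x := val v)); rewrite val_in_elems.
pose W := C :|: D.
have hW : #|W| = n.+2.
  by rewrite cardsU disj cards0 hC hD hn subn0 -addnn addSn addnS addnS.
have WV : W \subset Vm m by rewrite subUset CV DV.
have [a [aW ha [v0 hv0]]] := exists_dep hW.
have anz : forall v, v \in W -> a v != 0.
  move=> v vW; apply/negP => /eqP av.
  have : forall w, a w = 0.
    apply: (indep (S := W :\ v)).
    - exact: subset_trans (subD1set W v) WV.
    - by have := cardsD1 v W; rewrite vW hW add1n => -[<-].
    - by move=> w; rewrite in_setD1 negb_and negbK => /orP[/eqP->//|]; exact: aW.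
    - exact: ha.
  by move/(_ v0)/eqP; rewrite (negbTE hv0).
pose cv j : 'I_m.+1 := inord (nth 0 (elems C) j).
pose ev j : 'I_m.+1 := inord (nth 0 (elems D) j).
have vC j : (j < d.+1)%N -> val (cv j) = nth 0 (elems C) j.
  by move=> hj; rewrite /cv /= inordK // ltnS nth_elems_le // hC.
have vD j : (j < d.+2)%N -> val (ev j) = nth 0 (elems D) j.
  by move=> hj; rewrite /ev /= inordK // ltnS nth_elems_le // hD.
have cC j : (j < d.+1)%N -> cv j \in C by move=> hj; rewrite nth_elems_in // hC.
have eD j : (j < d.+2)%N -> ev j \in D by move=> hj; rewrite nth_elems_in // hD.
have inW w : w \in W -> (val w \in elems C) || (val w \in elems D).
  by rewrite !val_in_elems inE.
have cW j : (j < d.+1)%N -> cv j \in W by move=> hj; rewrite inE cC.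
have eW j : (j < d.+2)%N -> ev j \in W by move=> hj; rewrite inE eD ?orbT.
pose sg : R := if 0 < a (ev 0%N) then 1 else -1.
have sg2 : sg * sg = 1 by rewrite /sg; case: ifP => _; rewrite ?mulr1 ?mulrNN ?mulr1.
pose a' v := sg * a v.
have aW' v : v \notin W -> a' v = 0 by move=> h; rewrite /a' aW ?mulr0.
have ha' : moments a'.
  move=> k hk; under eq_bigr => v _ do rewrite /a' -mulrA.
  by rewrite -big_distrr /= ha // mulr0.
have step u u' : u \in W -> u' \in W -> (val u < val u')%N ->
    (forall w, w \in W -> ~~ ((val u < val w) && (val w < val u'))%N) ->
    a' u * a' u' < 0.
  move=> uW u'W uu' hc.
  have -> : a' u * a' u' = a u * a u' by rewrite /a' mulrACA sg2 mul1r.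
  by rewrite lt_neqAle mulf_neq0 ?anz //= (dep_sign WV hW aW ha uW u'W uu' hc).
have base : 0 < a' (ev 0%N).
  rewrite /a' /sg; case: ifP => h; rewrite ?mul1r // mulN1r oppr_gt0.
  by rewrite lt_neqAle anz ?eW // leNgt h.
have adv j : (j < d.+1)%N -> 0 < a' (ev j) -> a' (cv j) < 0 /\ 0 < a' (ev j.+1).
  move=> hj p; have hjc : (j < size (elems C))%N by rewrite sc.
  have hj2 : (j < d.+2)%N by apply: leqW.
  have hj3 : (j.+1 < d.+2)%N by [].
  have s1 : a' (ev j) * a' (cv j) < 0.
    apply: step; rewrite ?eW ?cW //; first by rewrite vD // vC //; case: (hh j hjc).
    by move=> w wW; rewrite vD // vC //; apply: inter_gap1 hI _ _ hjc (inW w wW).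
  have n1 : a' (cv j) < 0 by rewrite -(pmulr_rlt0 _ p).
  split => //.
  have s2 : a' (cv j) * a' (ev j.+1) < 0.
    apply: step; rewrite ?eW ?cW //; first by rewrite vD // vC //; case: (hh j hjc).
    by move=> w wW; rewrite vD // vC //; apply: inter_gap2 hI _ _ hjc (inW w wW).
  by rewrite -(nmulr_rlt0 _ n1).
have chain j : (j < d.+1)%N -> 0 < a' (ev j) /\ a' (cv j) < 0 /\ 0 < a' (ev j.+1).
  elim: j => [|j IH] hj; first by have [] := adv 0%N hj base.
  have [_ [_ p]] := IH (ltnW hj).
  by have [] := adv j.+1 hj p.
have posD v : v \in D -> 0 < a' v.
  move=> vD'; have : val v \in elems D by rewrite val_in_elems.
  case/(nthP 0) => k hk ek.
  have -> : v = ev k by apply: val_inj; rewrite vD -?hD -?size_elems // ek.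
  case: k hk {ek} => [|k] hk; first exact: base.
  have hk' : (k < d.+1)%N by move: hk; rewrite se sc.
  by have [_ [_ ]] := chain k hk'.
have negC v : v \in C -> a' v < 0.
  move=> vC'; have : val v \in elems C by rewrite val_in_elems.
  case/(nthP 0) => k hk ek.
  have -> : v = cv k by apply: val_inj; rewrite vC -?hC -?size_elems // ek.
  have hk' : (k < d.+1)%N by rewrite -sc.
  by have [_ []] := chain k hk'.
pose s := \sum_(v in D) a' v.
have s0 : 0 < s.
  have e0 : ev 0%N \in D by apply: eD.
  rewrite /s (bigD1 (ev 0%N)) //=; apply: (lt_le_trans base).
  rewrite lerDl; apply: sumr_ge0 => v /andP[vD2 _]; exact: ltW (posD v vD2).
have sn0 : s != 0 by rewrite gt_eqF.
pose lam v := if v \in D then a' v / s else 0.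
pose mu v := if v \in C then - a' v / s else 0.
pose b v := a' v / s.
have hb : moments b.
  move=> k hk; under eq_bigr => v _ do rewrite /b mulrAC.
  by rewrite -mulr_suml ha' // mul0r.
have ldiff v : lam v - mu v = b v.
  rewrite /lam /mu /b; case vD2: (v \in D).
    have -> : (v \in C) = false.
      by apply/negP => vC'; move: (in_set0 v); rewrite -disj inE vC' vD2.
    by rewrite subr0.
  case vC': (v \in C); first by rewrite sub0r mulNr opprK.
  by rewrite aW' ?mul0r ?subr0 // inE vD2 vC'.
have slam : \sum_v lam v = 1.
  by rewrite -big_mkcond /= -mulr_suml mulfV.
have smu : \sum_v mu v = 1.
  have : \sum_v (lam v - mu v) = 0.
    under eq_bigr => v _ do rewrite ldiff -[b v]mulr1 -(expr0 (t v)).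
    exact: hb.
  by rewrite sumrB slam => /eqP; rewrite subr_eq0 => /eqP <-.
pose x := \sum_v lam v *: mpoint n t v.
have xmu : x = \sum_v mu v *: mpoint n t v.
  apply/eqP; rewrite -subr_eq0 /x -sumrB.
  under eq_bigr => v _ do rewrite -scalerBl ldiff.
  by rewrite mom_vec.
have cD : in_conv t D x.
  exists lam; split => //.
  - move=> v; rewrite /lam; case: ifP => // vD2; apply: ltW.
    by apply: divr_gt0 => //; apply: posD.
  - by move=> v /negbTE; rewrite /lam => ->.
have cCx : in_conv t C x.
  exists mu; split => //.
  - move=> v; rewrite /mu; case: ifP => // vC'; apply: ltW.
    by apply: divr_gt0 => //; rewrite oppr_gt0; apply: negC.
  - by move=> v /negbTE; rewrite /mu => ->.
have [nu [nu0 nuS nu1 xnu]] := (hT2 _ _ S1T S2T x).1 (conj (conv_mono CS1 cCx) (conv_mono DS2 cD)).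
have hmn : forall v, mu v - nu v = 0.
  apply: (indep (S := S1)) => //; first by rewrite cS1.
  - move=> v vS1; rewrite nuS ?subr0; last by rewrite inE negb_and vS1.
    rewrite /mu; case: ifP => // vC'; move: vS1; by rewrite (subsetP CS1).
  - exact: conv_diff smu nu1 xmu xnu.
have CS2 : C \subset S2.
  apply/subsetP => v vC'.
  have : nu v != 0.
    have := hmn v; move/eqP; rewrite subr_eq0 => /eqP <-.
    rewrite /mu vC' gt_eqF //; apply: divr_gt0 => //; rewrite oppr_gt0; exact: negC.
  by apply: contraR => vS2; rewrite nuS // inE negb_and vS2 orbT.
have : W \subset S2 by rewrite subUset CS2 DS2.
by move/subset_leq_card; rewrite hW cS2 ltnn.
Qed.

End Geo.

Lemma count_thr (s : seq nat) x j : j <= size s ->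
  (forall i, i < size s -> (x < nth 0 s i) = (j <= i)) ->
  count (fun y => x < y) s = size s - j.
Proof.
move=> js h; rewrite -{1}[s](cat_take_drop j) count_cat.
have st : size (take j s) = j by rewrite size_takel.
rewrite (@eq_in_count _ _ pred0); last first.
  move=> y /(nthP 0) [i]; rewrite st => ij <-; rewrite nth_take // h //.
    by rewrite leqNgt ij.
  exact: leq_trans ij js.
rewrite count_pred0 add0n (@eq_in_count _ _ predT) ?count_predT ?size_drop //.
move=> y /(nthP 0) [i]; rewrite size_drop => ij <-; rewrite nth_drop h ?leq_addr //.
by rewrite -ltn_subRL.
Qed.

Lemma card_thr m (S : {set 'I_m.+1}) x :
  #|[set f in S | x < val f]| = count (fun y => x < y) (elems S).
Proof.
rewrite -size_elems -size_filter; congr size.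
apply: (irr_sorted_eq ltn_trans ltnn); first exact: elems_sorted.
  exact: (sorted_filter ltn_trans) (elems_sorted S).
move=> y; rewrite mem_filter !mem_elems.
apply/existsP/andP => [[v /andP[]]|[xy /existsP[v /andP[vS /eqP vy]]]].
  by rewrite inE => /andP[vS xv] /eqP vy; split; [rewrite -vy|apply/existsP; exists v; rewrite vS vy eqxx].
by exists v; rewrite inE vS /= vy xy eqxx.
Qed.

Lemma ineq1 (a b : nat -> nat) d i s :
  (forall j, j <= d -> b j < a j /\ a j < b j.+1) -> i < d -> a i < s -> s < b i.+1 ->
  forall j, j <= d ->
   (if j == i then a i else b j) < (if j == i then s else a j) /\
   (if j == i then s else a j) < (if j.+1 == i then a i else b j.+1).
Proof.
move=> h hi h1 h2 j hj; have [h3 h4] := h j hj.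
case: (j =P i) => [->|ji]; first by rewrite (gtn_eqF (ltnSn i)).
case: (j.+1 =P i) => [ji1|ji1]; last by [].
subst i; have [h5 h6] := h j.+1 (ltnW hi); split => //; lia.
Qed.

Lemma ineq2 (a b : nat -> nat) d i s :
  (forall j, j <= d -> b j < a j /\ a j < b j.+1) -> i < d -> b i.+1 < s -> s < a i.+1 ->
  forall j, j <= d ->
   (if j == i.+2 then a i.+1 else b j) < (if j == i.+1 then s else a j) /\
   (if j == i.+1 then s else a j) < (if j.+1 == i.+2 then a i.+1 else b j.+1).
Proof.
move=> h hi h1 h2 j hj; have [h3 h4] := h j hj.
case: (j =P i.+1) => [->|ji]; first by rewrite (ltn_eqF (ltnSn i.+1)) eqxx.
case: (j =P i.+2) => [ji2|ji2].
  subst j; have [h5 h6] := h i.+1 hi; rewrite (gtn_eqF (ltnSn i.+2)); split => //; lia.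
case: (j.+1 =P i.+2) => [ji1|ji1] //.
by case: ji; case: ji1.
Qed.

Lemma nu_seq m d (cs es : seq nat) : interlace cs es -> size cs = d.+1 ->
  all (fun x => x <= m) cs ->
  nth 0 cs d + 2 <= nth 0 cs 0 + m -> nth 0 cs 0 != 1 -> nth 0 cs d != m ->
  nu d [set v : 'I_m.+1 | val v \in cs].
Proof.
move=> hI sc am h1 h2 h3.
have [s1 _] := interlace_sorted hI.
have [se hh] := interlaceP _ _ hI.
rewrite /nu elems_seq // card_seq // sc eqxx h1 h2 h3 /= !andbT.
apply/andP; split.
  apply/subsetP => v; rewrite !inE => /(nthP 0) [j hj ej].
  have {}ej : @nth nat 0 cs j = val v := ej.
  by have [h _] := hh j hj; rewrite -ej; exact: leq_ltn_trans (leq0n _) h.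
apply/allP => j; rewrite mem_iota add0n => jd.
have j1 : j < size cs by rewrite sc ltnW.
have j2 : j.+1 < size cs by rewrite sc.
have [h4 h5] := hh j j1.
have [h6 h7] := hh j.+1 j2.
rewrite addn2; exact: leq_ltn_trans h5 h6.
Qed.

Unset Implicit Arguments. Set Strict Implicit. Set Printing Implicit Defensive.

Theorem lemma3p7 (R : realFieldType) (m d : nat) (t : 'I_m.+1 -> R)
    (T : {set {set 'I_m.+1}}) (A B : {set 'I_m.+1}) :
  (forall u v : 'I_m.+1, 0 < val u -> val u < val v -> (t u < t v)%R) ->
  triangulates (d.*2.+1) t (Vm m) T ->
  (* A is a mutable d-simplex of T replaced by B in the increasing flip *)
  A \in simp d T ->
  #|B| = d.+2 -> B \subset Vm m ->
  interlace (elems A) (elems B) ->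
  triangulates (d.*2.+1) t (A :|: B) [set S in T | S \subset A :|: B] ->
  [set S in T | S \subset A :|: B] = lower_tri (d.*2.+1) (A :|: B) ->
  (* conclusion: B' is the unique support of A w.r.t. simp(T) *)
  is_support d (simp d T) A (inner d B) /\
  (forall Sigma, is_support d (simp d T) A Sigma -> Sigma = inner d B).
Proof.
move=> ht hT hA cB BV hI hTU hlow.
have nuA : nu d A by move: hA; rewrite inE => /andP[].
move: (nuA); rewrite /nu /= => /and5P[/eqP cA AV _ ha1 /andP[ha2 ha3]].
have sa : size (elems A) = d.+1 by rewrite size_elems.
have sb : size (elems B) = d.+2 by rewrite size_elems.
have [se hh] := interlaceP _ _ hI.
have [sra srb] := interlace_sorted hI.
have hab j : j <= d -> nth 0 (elems B) j < nth 0 (elems A) j /\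
                      nth 0 (elems A) j < nth 0 (elems B) j.+1.
  by move=> hj; apply: hh; rewrite sa.
have disjAB : A :&: B = set0.
  apply/setP => v; rewrite !inE; apply/negP => /andP[vA vB].
  by apply: (inter_disj hI (x := val v)); rewrite val_in_elems.
pose U := A :|: B.
have cU : #|U| = d.*2.+3.
  by rewrite cardsU disjAB cards0 cA cB subn0 -addnn addSn addnS addnS.
pose bv j : 'I_m.+1 := inord (nth 0 (elems B) j).
have vbv j : j < d.+2 -> val (bv j) = nth 0 (elems B) j.
  by move=> hj; rewrite /bv /= inordK // ltnS nth_elems_le // cB.
have bvB j : j < d.+2 -> bv j \in B by move=> hj; rewrite nth_elems_in // cB.
have FT j : j < d.+2 -> U :\ bv j \in T.
  move=> hj.
  suff : U :\ bv j \in lower_tri (d.*2.+1) U by rewrite -hlow inE => /andP[].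
  rewrite inE subD1set /=; apply/andP; split.
    by have := cardsD1 (bv j) U; rewrite [bv j \in U]inE bvB ?orbT // cU add1n => -[<-].
  apply/forallP => w; apply/implyP; rewrite in_setD in_setD1 negb_and negbK.
  case/andP => /orP[/eqP -> _|]; last by move/negbTE->.
  have -> : [set f in U :\ bv j | bv j < f] =
      [set f in A | nth 0 (elems B) j < val f] :|: [set f in B | nth 0 (elems B) j < val f].
    apply/setP => f; rewrite !inE vbv //.
    case: (ltnP (nth 0 (elems B) j) (val f)) => h; rewrite ?andbF ?andbT //.
    have -> : f != bv j by apply: contraTneq h => ->; rewrite vbv // ltnn.
    by [].
  rewrite cardsU (_ : _ :&: _ = set0) ?cards0 ?subn0; last first.
    apply/setP => f; rewrite !inE; apply/negP => /andP[/andP[fA _] /andP[fB _]].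
    have : f \in A :&: B by rewrite inE fA fB.
    by rewrite disjAB inE.
  rewrite !card_thr (count_thr (j := j)) ?sa //; last first.
    move=> i hi; have hid : i <= d by [].
    have hia : i < size (elems A) by rewrite sa.
    have [h1 h2] := hab i hid.
    apply/idP/idP => h.
      rewrite leqNgt; apply/negP => ij.
      have hjb : j < size (elems B) by rewrite sb.
      have := lenth srb ij hjb; clear -h h2; lia.
    have hib : i < size (elems B) by rewrite sb ltnW.
    have := lenth srb h hib; clear -h1; lia.
  rewrite (count_thr (j := j.+1)) ?sb //; last first.
    have hjb : j < size (elems B) by rewrite sb.
    move=> i hi; apply/idP/idP => h.
      by apply: nth_rev_lt srb hjb _ h; rewrite sb.
    by apply: ltnth srb h _; rewrite sb.
  by rewrite subSS addnn odd_double.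
have einner : elems (inner d B) = mkseq (fun i => nth 0 (elems B) i.+1) d.
  apply: (irr_sorted_eq ltn_trans ltnn); first exact: elems_sorted.
    apply: sorted_from_nth => i; rewrite size_mkseq => hi.
    have hi' : i < d := ltnW hi.
    rewrite !nth_mkseq //; apply: (ltnth srb (ltnSn i.+1)); by rewrite sb !ltnS ltnW.
  move=> x; rewrite mem_elems; apply/existsP/idP => [[v /andP[]]|].
    rewrite inE => /and3P[vB v0 vd] /eqP <-.
    have : val v \in elems B by rewrite val_in_elems.
    case/(nthP 0) => k hk ek.
    have {}ek : @nth nat 0 (elems B) k = val v := ek.
    move: v0 vd; rewrite -ek => v0 vd.
    case: k hk ek v0 vd => [|k] hk ek; first by rewrite eqxx.
    move=> _ vd; have hkd : k < d.
      move: hk; rewrite sb ltnS leq_eqVlt => /orP[/eqP ek1|//].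
      by move: vd; rewrite ek1 eqxx.
    by apply/(nthP 0); exists k; rewrite ?size_mkseq ?nth_mkseq.
  case/(nthP 0) => i; rewrite size_mkseq => hi ei.
  have {}ei : nth 0 (elems B) i.+1 = x by rewrite -ei nth_mkseq.
  have hi1 : i.+1 < size (elems B) by rewrite sb ltnS ltnW.
  have hiB : i.+1 < #|B| by rewrite cB ltnS ltnW.
  have xm : x < m.+1 by rewrite ltnS -ei nth_elems_le.
  exists (inord x); rewrite inE /= inordK // eqxx andbT.
  rewrite -ei nth_elems_in //=.
  apply/andP; split.
    by rewrite neq_ltn; apply/orP; right; apply: ltnth srb _ hi1.
  rewrite neq_ltn; apply/orP; left; apply: ltnth srb _ _; rewrite ?sb //.
split.
  split.
  - by rewrite -size_elems einner size_mkseq.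
  - by apply: subset_trans BV; apply/subsetP => v; rewrite inE => /andP[].
  - apply/interlaceP; rewrite einner size_mkseq sa; split => // i hi.
    rewrite nth_mkseq //; have [h1 h2] := hab i (ltnW hi); have [h3 h4] := hab i.+1 hi.
    by [].
  - move=> C nuC CAS; rewrite inE nuC /=; apply/existsP; exists (U :\ bv 0).
    rewrite FT //=; apply/subsetP => v vC; have := subsetP CAS v vC.
    rewrite !inE => /orP[vA|/and3P[vB nb0 _]].
      rewrite vA andbT; apply/eqP => e.
      apply: (inter_disj hI (x := val v)); first by rewrite val_in_elems.
      by rewrite e vbv // mem_nth // sb.
    rewrite vB orbT andbT; apply: contraNneq nb0 => ->; by rewrite vbv.
move=> Sg [cS SV hIS hsup].
have ss : size (elems Sg) = d by rewrite size_elems.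
have [sa' hs] := interlaceP _ _ hIS.
have finish (f g : nat -> nat) k : k < d.+2 ->
    interlace (mkseq f d.+1) (mkseq g d.+2) ->
    (forall j, j < d.+1 -> (f j \in elems Sg) || (f j \in elems A)) ->
    (forall j, j < d.+2 -> j != k -> g j = nth 0 (elems B) j) ->
    g k \in elems A ->
    f d + 2 <= f 0 + m -> f 0 != 1 -> f d != m -> False.
  move=> hk hI' hf hg hgk n1 n2 n3.
  have [scs ses] := interlace_sorted hI'.
  have acs : all (fun x => x <= m) (mkseq f d.+1).
    apply/allP => x /(nthP 0) [j]; rewrite size_mkseq => hj <-; rewrite nth_mkseq //.
    by case/orP: (hf j hj) => /elems_le.
  have aes : all (fun x => x <= m) (mkseq g d.+2).
    apply/allP => x /(nthP 0) [j]; rewrite size_mkseq => hj <-; rewrite nth_mkseq //.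
    case: (eqVneq j k) => [->|jk]; first exact: elems_le hgk.
    by rewrite hg //; apply: nth_elems_le; rewrite cB.
  have nuC : nu d [set v : 'I_m.+1 | val v \in mkseq f d.+1].
    by apply: (nu_seq hI'); rewrite ?size_mkseq ?nth_mkseq.
  have CAS : [set v : 'I_m.+1 | val v \in mkseq f d.+1] \subset A :|: Sg.
    apply/subsetP => v; rewrite in_set => /(nthP 0) [j]; rewrite size_mkseq => hj.
    rewrite nth_mkseq // => e; have := hf j hj; rewrite e !val_in_elems in_setU orbC.
    by [].
  have := hsup _ nuC CAS; rewrite inE => /andP[_ /existsP[S1 /andP[S1T CS1]]].
  have DS2 : [set v : 'I_m.+1 | val v \in mkseq g d.+2] \subset U :\ bv k.
    apply/subsetP => v; rewrite in_set => /(nthP 0) [j]; rewrite size_mkseq => hj.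
    rewrite nth_mkseq // => e; rewrite in_setD1 in_setU.
    case: (eqVneq j k) => [ejk|jk].
      subst j; move: hgk; rewrite e val_in_elems => vA; rewrite vA andbT.
      apply/eqP => ev; apply: (inter_disj hI (x := val v)); first by rewrite val_in_elems.
      by rewrite ev vbv // mem_nth // sb.
    move: e; rewrite hg // => e.
    have vB : v \in B by rewrite -val_in_elems -e mem_nth // sb.
    rewrite vB orbT andbT; apply/eqP => ev; move: e; rewrite ev vbv // => e.
    by move: jk; rewrite (nth_inj srb _ _ e) ?eqxx ?sb.
  apply: (geo ht (d := d) erefl hT S1T (FT k hk) CS1 DS2).
    by rewrite card_seq ?size_mkseq.
  by rewrite !elems_seq.
apply: elems_inj; rewrite einner.
apply: (@eq_from_nth _ 0); first by rewrite ss size_mkseq.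
move=> i; rewrite ss => hi; rewrite nth_mkseq //.
have his : i < size (elems Sg) by rewrite ss.
have [hs1 hs2] := hs i his.
have si_in : nth 0 (elems Sg) i \in elems Sg := mem_nth 0 his.
have ai_in j : j < d.+1 -> nth 0 (elems A) j \in elems A.
  by move=> hj; apply: mem_nth; rewrite sa.
have hid : i < d.+1 by apply: ltnW.
have hid2 : i < d.+2 by apply: ltnW.
have a0pos : 0 < nth 0 (elems A) 0 by have [h1 _] := hab 0 (leq0n d); apply: leq_ltn_trans h1.
case: (ltngtP (nth 0 (elems Sg) i) (nth 0 (elems B) i.+1)) => // hlt; exfalso.
  apply: (finish (fun j => if j == i then nth 0 (elems Sg) i else nth 0 (elems A) j)
                 (fun j => if j == i then nth 0 (elems A) i else nth 0 (elems B) j) i) => //.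
  - apply/interlaceP; rewrite !size_mkseq; split => // j hj.
    rewrite !nth_mkseq //; last by apply: ltnW.
    exact: (ineq1 hab hi hs1 hlt).
  - by move=> j hj; case: eqP => _; rewrite ?si_in ?ai_in ?orbT.
  - by move=> j hj /negbTE ->.
  - by rewrite eqxx ai_in.
  - rewrite (gtn_eqF hi); case: (0 =P i) => [ei|_] //.
    apply: (leq_trans ha1); rewrite leq_add2r; subst i; exact: ltnW.
  - case: (0 =P i) => [ei|_] //; subst i.
    by rewrite neq_ltn; apply/orP; right; apply: leq_ltn_trans hs1.
  - by rewrite (gtn_eqF hi).
apply: (finish (fun j => if j == i.+1 then nth 0 (elems Sg) i else nth 0 (elems A) j)
               (fun j => if j == i.+2 then nth 0 (elems A) i.+1 else nth 0 (elems B) j) i.+2) => //.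
- apply/interlaceP; rewrite !size_mkseq; split => // j hj.
  rewrite !nth_mkseq //; last by apply: ltnW.
  exact: (ineq2 hab hi hlt hs2).
- by move=> j hj; case: eqP => _; rewrite ?si_in ?ai_in ?orbT.
- by move=> j hj /negbTE ->.
- by rewrite eqxx ai_in.
- case: (d =P i.+1) => [ed|_] //.
  apply: leq_trans ha1; rewrite leq_add2r ed; exact: ltnW.
- case: (d =P i.+1) => [ed|_] //.
  have : nth 0 (elems A) i.+1 <= m by apply: nth_elems_le; rewrite cA.
  by move=> h; rewrite neq_ltn; apply/orP; left; exact: leq_trans hs2 h.
Qed.
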